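(* Let $\Gamma$ be a simple $*$-path in $\Lambda$, let $t\in\mathbb{N}$ and $s\in\mathbb{N}$. For every $k\in\{0,\dots,|\mathrm{support}(\Gamma)|\}$ and every configuration $y$ in which exactly $k$ edges of $\Gamma$ are closed (with $P_\mu(Y_t=y)>0$), $$P_\mu\big(\Gamma\text{ closed in }Y_{t+s}\ \big|\ Y_t=y\big)\leqslant\left(\frac{s(1-p)}{|\Lambda|(1+p/q-p)}\right)^{|\mathrm{support}(\Gamma)|-k}.$$
   Context: Let $d\geqslant 2$, $\mathbb{L}^d=(\mathbb{Z}^d,\mathbb{E}^d)$ the nearest-neighbour lattice, and $q\geqslant 1$, $p\in[0,1]$. The box $\Lambda=(V,E)$ is the subgraph of $\mathbb{L}^d$ induced by the vertices in a $d$-dimensional cube centred at the origin (not necessarily axis-parallel); $|\Lambda|=|E|$. $\partial\Lambda=\{x\in V:\exists y\notin V,\ \langle x,y\rangle\in\mathbb{E}^d\}$. A hyperplane through the origin parallel to a face of the cube splits $\Lambda$ into $\Lambda^+,\Lambda^-$; $T=\partial\Lambda\cap\Lambda^+$, $B=\partial\Lambda\cap\Lambda^-$. For $\omega\in\{0,1\}^E$ (edges with $\omega(e)=1$ open), $\Phi^{TB}_{\Lambda,p,q}(\omega)\propto\prod_{e\in E}p^{\omega(e)}(1-p)^{1-\omega(e)}q^{k^{TB}(\omega)}$, where $k^{TB}(\omega)$ is the number of connected components of the graph obtained from $(V,\{\text{open edges}\})$ by adding two extra vertices, one joined to every vertex of $T$, the other to every vertex of $B$. $\{T\nleftrightarrow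 B\}$: no open path in $\Lambda$ joins $T$ to $B$. Coupled dynamics: $(E_t)_{t\in\mathbb{N}}$ i.i.d. uniform on $E$, $(U_t)_{t\in\mathbb{N}}$ i.i.d. uniform on $[0,1]$, independent. With $\Phi=\Phi^{TB}_{\Lambda,p,q}$, $\omega^e$ / $\omega_e$ the configuration with $e$ opened / closed, and $\theta(\omega,e)=\Phi(\omega_e)/(\Phi(\omega^e)+\Phi(\omega_e))$: at time $t$, with $e=E_t$, only $e$ is updated; $X_t(e)=1$ iff $U_t\geqslant\theta(X_{t-1},e)$; $Y_t(e)=1$ iff $U_t\geqslant\theta(Y_{t-1},e)$ and opening $e$ in $Y_{t-1}$ does not connect $T$ to $B$. On $\{(\omega_1,\omega_2):\omega_2\in\{T\nleftrightarrow B\},\ \omega_1\geqslant\omega_2\}$ this chain has a unique stationary distribution $\mu_{\Lambda,p,q}$; $P_\mu$ denotes the law of $(X_t,Y_t)_{t\in\mathbb{N}}$ started from $(X_0,Y_0)\sim\mu_{\Lambda,p,q}$. Two edges $e,f$ are $*$-neighbours if $\|m_e-m_f\|_\infty\leqslant 1$ ($m_e$ the midpoint of $e$); a $*$-path is a sequence of edges with consecutive ones $*$-neighbours; $\mathrm{support}(\Gamma)$ is its set of edges; it is simple if $|\mathrm{support}(\Gamma)|$ equals its length; ''$\Gamma$ closed in $Y_{t+s}$'' means all edges of $\Gamma$ are closed in $Y_{t+s}$. *)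

(* Defs.v *)
From HB Require Import structures.
From mathcomp Require Import all_boot all_order all_algebra.
From mathcomp Require Import boolp classical_sets reals ereal measure
  lebesgue_stieltjes_measure lebesgue_measure.
Set Implicit Arguments.
Unset Strict Implicit.
Unset Printing Implicit Defensive.
Import Order.TTheory GRing.Theory Num.Theory.
Local Open Scope ring_scope.

(* Finite ambient grid {-N,...,N}^d of Z^d (only an auxiliary container:
   the theorem assumes the box is contained in it). *)
Definition pt (d N : nat) := {ffun 'I_d -> 'I_(N + N).+1}.

Definition zcoord (d N : nat) (v : pt d N) : 'I_d -> int :=
  fun i => (v i)%:Z - N%:Z.

Definition adjZ (d : nat) (z w : 'I_d -> int) : bool :=
  (\sum_(i < d) absz (z i - w i))%N == 1%N.

Definition face_coord (R : realType) (d : nat) (O : 'M[R]_d) (i : 'I_d)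
  (z : 'I_d -> int) : R := \sum_(j < d) O i j * (z j)%:~R.

(* closed cube centred at the origin, face normals = rows of the
   orthogonal matrix O, half side-length r *)
Definition in_cube (R : realType) (d : nat) (O : 'M[R]_d) (r : R)
  (z : 'I_d -> int) : bool := [forall i, `|face_coord O i z| <= r].

Definition boxV (R : realType) (d N : nat) (O : 'M[R]_d) (r : R) : {set pt d N} :=
  [set v : pt d N | in_cube O r (zcoord v)].

Definition bdry (R : realType) (d N : nat) (O : 'M[R]_d) (r : R) : {set pt d N} :=
  [set v in boxV N O r |
     `[< exists z : 'I_d -> int, adjZ (zcoord v) z /\ ~~ in_cube O r z >]].

(* side v = true iff v in Lambda^+ *)
Definition Tset (R : realType) (d N : nat) (O : 'M[R]_d) (r : R)
  (side : pt d N -> bool) : {set pt d N} := [set v in bdry N O r | side v].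
Definition Bset (R : realType) (d N : nat) (O : 'M[R]_d) (r : R)
  (side : pt d N -> bool) : {set pt d N} := [set v in bdry N O r | ~~ side v].

Definition boxE (R : realType) (d N : nat) (O : 'M[R]_d) (r : R) : {set {set pt d N}} :=
  [set e : {set pt d N} | [exists x : pt d N, exists y : pt d N,
     [&& e == [set x; y], adjZ (zcoord x) (zcoord y), x \in boxV N O r
       & y \in boxV N O r]]].

Definition midpoint (R : realType) (d N : nat) (e : {set pt d N}) (i : 'I_d) : R :=
  (\sum_(v in e) (zcoord v i)%:~R) / 2.

Definition star_nb (R : realType) (d N : nat) : rel {set pt d N} :=
  fun e f => [forall i, `|midpoint R e i - midpoint R f i| <= 1].

Definition star_path (R : realType) (d N : nat) (G : seq {set pt d N}) : bool :=
  sorted (star_nb R (N:=N)) G.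

Definition path_support (d N : nat) (G : seq {set pt d N}) : {set {set pt d N}} :=
  [set e in G].

Definition simple_path (d N : nat) (G : seq {set pt d N}) : bool :=
  #|path_support G| == size G.

(* a configuration = its set of open edges (a subset of E) *)
Definition config (d N : nat) := {set {set pt d N}}.

Definition open_rel (d N : nat) (w : config d N) : rel (pt d N) :=
  fun a b => [set a; b] \in w.

Definition noTB (R : realType) (d N : nat) (O : 'M[R]_d) (r : R)
  (side : pt d N -> bool) (w : config d N) : bool :=
  [forall x in Tset O r side, forall y in Bset O r side,
      ~~ connect (open_rel w) x y].

(* graph (V, open edges) + ghost vertex inr true joined to T and ghost
   vertex inr false joined to B *)
Definition ext_adj (R : realType) (d N : nat) (O : 'M[R]_d) (r : R)
  (side : pt d N -> bool) (w : config d N) : rel (pt d N + bool) :=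
  fun a b => match a, b with
  | inl x, inl y => [set x; y] \in w
  | inl x, inr true | inr true, inl x => x \in Tset O r side
  | inl x, inr false | inr false, inl x => x \in Bset O r side
  | inr _, inr _ => false
  end.

Definition ext_vert (R : realType) (d N : nat) (O : 'M[R]_d) (r : R) :
  {pred (pt d N + bool)} :=
  fun a => match a with inl x => x \in boxV N O r | inr _ => true end.

Definition kTB (R : realType) (d N : nat) (O : 'M[R]_d) (r : R)
  (side : pt d N -> bool) (w : config d N) : nat :=
  n_comp (ext_adj O r side w) (@ext_vert R d N O r).

Definition FKweight (R : realType) (d N : nat) (O : 'M[R]_d) (r : R)
  (side : pt d N -> bool) (p q : R) (w : config d N) : R :=
  (\prod_(e in boxE N O r) (p ^+ (e \in w) * (1 - p) ^+ (1 - (e \in w))))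
  * q ^+ kTB O r side w.

Definition Phi (R : realType) (d N : nat) (O : 'M[R]_d) (r : R)
  (side : pt d N -> bool) (p q : R) (w : config d N) : R :=
  FKweight O r side p q w /
  \sum_(w' : config d N | w' \subset boxE N O r) FKweight O r side p q w'.

Definition theta (R : realType) (d N : nat) (O : 'M[R]_d) (r : R)
  (side : pt d N -> bool) (p q : R) (w : config d N) (e : {set pt d N}) : R :=
  Phi O r side p q (w :\ e) /
  (Phi O r side p q (e |: w) + Phi O r side p q (w :\ e)).

Definition state (d N : nat) := (config d N * config d N)%type.

Definition step (R : realType) (d N : nat) (O : 'M[R]_d) (r : R)
  (side : pt d N -> bool) (p q : R) (a : state d N) (e : {set pt d N}) (u : R)
  : state d N :=
  ((if theta O r side p q a.1 e <= u then e |: a.1 else a.1 :\ e),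
   (if (theta O r side p q a.2 e <= u) && noTB O r side (e |: a.2)
    then e |: a.2 else a.2 :\ e)).

Definition kernel (R : realType) (d N : nat) (O : 'M[R]_d) (r : R)
  (side : pt d N -> bool) (p q : R) (a b : state d N) : R :=
  (#|boxE N O r|%:R)^-1 *
  \sum_(e in boxE N O r)
     fine (@lebesgue_measure R
       [set u : R | (0 <= u <= 1) /\ step O r side p q a e u = b]%classic).

Fixpoint kpow (R : realType) (d N : nat) (O : 'M[R]_d) (r : R)
  (side : pt d N -> bool) (p q : R) (n : nat) (a b : state d N) : R :=
  match n with
  | 0 => (a == b)%:R
  | n'.+1 => \sum_(c : state d N) kpow O r side p q n' a c * kernel O r side p q c b
  end.

Definition chain_space (R : realType) (d N : nat) (O : 'M[R]_d) (r : R)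
  (side : pt d N -> bool) (a : state d N) : bool :=
  [&& a.1 \subset boxE N O r, a.2 \subset boxE N O r,
      noTB O r side a.2 & a.2 \subset a.1].

Definition is_stationary (R : realType) (d N : nat) (O : 'M[R]_d) (r : R)
  (side : pt d N -> bool) (p q : R) (nu : state d N -> R) : Prop :=
  [/\ forall a, 0 <= nu a,
      \sum_(a : state d N) nu a = 1,
      forall a, ~~ chain_space O r side a -> nu a = 0
    & forall b, \sum_(a : state d N) nu a * kernel O r side p q a b = nu b].

Definition is_unique_stationary (R : realType) (d N : nat) (O : 'M[R]_d) (r : R)
  (side : pt d N -> bool) (p q : R) (mu : state d N -> R) : Prop :=
  is_stationary O r side p q mu /\
  forall nu, is_stationary O r side p q nu -> forall a, nu a = mu a.

Definition law_at (R : realType) (d N : nat) (O : 'M[R]_d) (r : R)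
  (side : pt d N -> bool) (p q : R) (mu : state d N -> R) (t : nat)
  (b : state d N) : R :=
  \sum_(a : state d N) mu a * kpow O r side p q t a b.

Definition PY (R : realType) (d N : nat) (O : 'M[R]_d) (r : R)
  (side : pt d N -> bool) (p q : R) (mu : state d N -> R) (t : nat)
  (y : config d N) : R :=
  \sum_(x : config d N) law_at O r side p q mu t (x, y).

Definition closed_in (d N : nat) (G : seq {set pt d N}) (w : config d N) : bool :=
  all (fun e => e \notin w) G.

Definition PY_closed (R : realType) (d N : nat) (O : 'M[R]_d) (r : R)
  (side : pt d N -> bool) (p q : R) (mu : state d N -> R) (t s : nat)
  (y : config d N) (G : seq {set pt d N}) : R :=
  \sum_(x : config d N) law_at O r side p q mu t (x, y) *
     \sum_(b : state d N | closed_in G b.2) kpow O r side p q s (x, y) b.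

Definition cond_closed (R : realType) (d N : nat) (O : 'M[R]_d) (r : R)
  (side : pt d N -> bool) (p q : R) (mu : state d N -> R) (t s : nat)
  (y : config d N) (G : seq {set pt d N}) : R :=
  PY_closed O r side p q mu t s y G / PY O r side p q mu t y.

(* Main.v *)
Require Import Defs.
From HB Require Import structures.
From mathcomp Require Import all_boot all_order all_algebra.
From mathcomp Require Import boolp classical_sets reals ereal measure
  lebesgue_stieltjes_measure lebesgue_measure.
From mathcomp Require Import ring lra.
Import Order.TTheory GRing.Theory Num.Theory.
Local Open Scope ring_scope.

Module G1.
Local Open Scope nat_scope.
Set Implicit Arguments.
Unset Strict Implicit.
Unset Printing Implicit Defensive.

Section G.
Variables (T : finType) (e1 e2 : rel T) (u v : T).
Hypothesis s1 : connect_sym e1.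
Hypothesis s2 : connect_sym e2.
Hypothesis he : forall x y, e2 x y -> [|| e1 x y, (x == u) && (y == v) | (x == v) && (y == u)].

Definition CC x y := [|| connect e1 x y, connect e1 x u && connect e1 v y
                        | connect e1 x v && connect e1 u y].

Lemma CC_prep x z y : e2 x z -> CC z y -> CC x y.
Proof.
move=> /he /or3P [h|/andP[/eqP-> /eqP->]|/andP[/eqP-> /eqP->]].
- case/or3P=> [c|/andP[c1 c2]|/andP[c1 c2]]; apply/or3P.
  + by constructor 1; apply: connect_trans (connect1 h) c.
  + by constructor 2; rewrite c2 (connect_trans (connect1 h) c1).
  + by constructor 3; rewrite c2 (connect_trans (connect1 h) c1).
- case/or3P=> [c|/andP[c1 c2]|/andP[c1 c2]]; apply/or3P.
  + by constructor 2; rewrite connect0 c.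
  + by constructor 2; rewrite connect0 c2.
  + by constructor 1.
- case/or3P=> [c|/andP[c1 c2]|/andP[c1 c2]]; apply/or3P.
  + by constructor 3; rewrite connect0 c.
  + by constructor 1.
  + by constructor 3; rewrite connect0 c2.
Qed.

Lemma CC_connect x y : connect e2 x y -> CC x y.
Proof.
case/connectP=> pth.
elim: pth x => [|z pth IH] x /=.
  by move=> _ ->; rewrite /CC connect0.
by case/andP=> h hp hl; apply: CC_prep h (IH _ hp hl).
Qed.

Lemma ncomp_le (a : {pred T}) : fingraph.closed e2 a ->
  n_comp e1 a <= (n_comp e2 a).+1.
Proof.
move=> cl.
set S1 := predI (roots e1) (mem a).
pose rv := fingraph.root e1 v.
have H1 : #|S1| <= #|[predD1 S1 & rv]|.+1.
  rewrite (cardD1 rv S1) /=. case: (rv \in S1) => //=.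
have H2 : #|[predD1 S1 & rv]| <= n_comp e2 a.
  rewrite -(@card_in_imset _ _ (fingraph.root e2)).
    apply: subset_leq_card; apply/fintype.subsetP=> z /imsetP[x]; rewrite !inE.
    case/andP=> _ /andP[_ xa] ->; rewrite /= roots_root //=.
    by rewrite -(closed_connect cl (connect_root e2 x)).
  move=> x x'; rewrite !inE => /andP[nx /andP[rx _]] /andP[nx' /andP[rx' _]] /eqP.
  rewrite root_connect // => /CC_connect /or3P[c|/andP[_ c]|/andP[c _]].
  - by move/eqP: rx <-; move/eqP: rx' <-; apply/(fingraph.rootP s1).
  - by move: nx'; rewrite /rv -(eqP rx'); move/(fingraph.rootP s1): c => ->; rewrite eqxx.
  - by move: nx; rewrite /rv -(eqP rx); move/(fingraph.rootP s1): c => ->; rewrite eqxx.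
exact: leq_trans H1 _.
Qed.
End G.

End G1.
Import G1.

Module G2.
Set Implicit Arguments.
Unset Strict Implicit.
Unset Printing Implicit Defensive.
Import Order.TTheory GRing.Theory Num.Theory.
Local Open Scope ring_scope.

Section K.
Variables (R : realType) (d N : nat) (O : 'M[R]_d) (r : R) (side : pt d N -> bool).

Lemma boxE_V f x : f \in boxE N O r -> x \in f -> x \in boxV N O r.
Proof.
rewrite inE => /fintype.existsP[a /fintype.existsP[b /and4P[/eqP-> _ ha hb]]].
by move=> /set2P[]->.
Qed.

Lemma set2_eq (a b x y : pt d N) : [set a; b] = [set x; y] ->
  (a == x) && (b == y) || (a == y) && (b == x).
Proof.
move=> H.
have ha : a \in [set x; y] by rewrite -H set21.
have hb : b \in [set x; y] by rewrite -H set22.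
have hx : x \in [set a; b] by rewrite H set21.
have hy : y \in [set a; b] by rewrite H set22.
move: ha hb hx hy => /set2P[]-> /set2P[]-> /set2P[] hx /set2P[] hy; subst; rewrite !eqxx ?orbT //.
Qed.

Lemma TV x : x \in Tset O r side -> x \in boxV N O r.
Proof. by rewrite /Tset /bdry !inE => /andP[/andP[]]. Qed.
Lemma BV x : x \in Bset O r side -> x \in boxV N O r.
Proof. by rewrite /Bset /bdry !inE => /andP[/andP[]]. Qed.

Lemma ext_sym w : symmetric (ext_adj O r side w).
Proof.
by move=> [a|[]] [b|[]] //=; rewrite finset.setUC.
Qed.

Lemma ext_closed (w : config d N) : w \subset boxE N O r ->
  fingraph.closed (ext_adj O r side w) (@ext_vert R d N O r).
Proof.
move=> wE [a|[]] [b|[]] //=.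
- move=> h; have hE := fintype.subsetP wE _ h.
  have h1 := boxE_V hE (set21 a b); have h2 := boxE_V hE (set22 a b).
  by change ((a \in boxV N O r) = (b \in boxV N O r)); rewrite h1 h2.
- by move/TV; rewrite !unfold_in /= => ->.
- by move/BV; rewrite !unfold_in /= => ->.
- by move/TV; rewrite !unfold_in /= => ->.
- by move/BV; rewrite !unfold_in /= => ->.
Qed.

Lemma kTB_le (w : config d N) (e : {set pt d N}) : w \subset boxE N O r -> e \in boxE N O r ->
  (kTB O r side (w :\ e) <= (kTB O r side (e |: w)).+1)%N.
Proof.
move=> wE eE.
have := eE; rewrite inE => /fintype.existsP[x0 /fintype.existsP[y0 /and4P[/eqP ee _ _ _]]].
apply: (@ncomp_le _ _ _ (inl x0) (inl y0)).
- exact: sym_connect_sym (ext_sym _).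
- exact: sym_connect_sym (ext_sym _).
- move=> [a|[]] [b|[]] //=; try by move=> ->.
move=> h; case: (eqVneq [set a; b] e) => [hab|hne].
    rewrite ee in hab; move: (set2_eq hab) => /orP[]/andP[/eqP-> /eqP->];
    by rewrite !eqxx ?orbT.
  have hw : [set a; b] \in w by move: h; rewrite in_setU1 (negbTE hne).
  by rewrite in_setD1 hne hw.
- apply: ext_closed; by rewrite finset.subUset finset.sub1set eE wE.
Qed.
End K.

End G2.
Import G2.

Module G3.
Set Implicit Arguments.
Unset Strict Implicit.
Unset Printing Implicit Defensive.
Import Order.TTheory GRing.Theory Num.Theory.
Local Open Scope ring_scope.

Section T.
Variables (R : realType) (d N : nat) (O : 'M[R]_d) (r : R) (side : pt d N -> bool).
Variables (p q : R).

Definition bnd := (1 - p) / (1 + p / q - p).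

Lemma D_gt0 (p0 : 0 <= p) (p1 : p <= 1) (q1 : 1 <= q) : 0 < 1 + p / q - p.
Proof.
have q0 : 0 < q by apply: lt_le_trans q1.
have iq0 : 0 < q^-1 by rewrite invr_gt0.
have iq1 : q^-1 <= 1 by rewrite invf_le1.
have : 0 <= (1 - p) * (1 - q^-1) by apply: mulr_ge0; lra.
have -> : 1 + p / q - p = (1 - p) * (1 - q^-1) + q^-1 by ring.
lra.
Qed.

Lemma bnd_ge0 (p0 : 0 <= p) (p1 : p <= 1) (q1 : 1 <= q) : 0 <= bnd.
Proof. apply: divr_ge0; [lra| exact: ltW (D_gt0 p0 p1 q1)]. Qed.

Lemma div_scale (a b z : R) : z != 0 -> a / z / (b / z + a / z) = a / (b + a).
Proof. by move=> zn0; rewrite -mulrDl invfM invrK mulrACA mulVf // mulr1. Qed.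

Lemma theta_le (p0 : 0 <= p) (p1 : p <= 1) (q1 : 1 <= q) (w : config d N) e : w \subset boxE N O r -> e \in boxE N O r ->
  theta O r side p q w e <= bnd.
Proof.
move=> wE eE.
pose fac (v : config d N) (f : {set pt d N}) := p ^+ (f \in v) * (1 - p) ^+ (1 - (f \in v)).
pose A := \prod_(f in boxE N O r | f != e) fac w f.
have A0 : 0 <= A.
  apply: prodr_ge0 => f _; apply: mulr_ge0; apply: exprn_ge0; lra.
pose k1 := kTB O r side (e |: w).
pose k0 := kTB O r side (w :\ e).
have F1 : FKweight O r side p q (e |: w) = p * A * q ^+ k1.
  rewrite /FKweight (bigD1 e) //= setU11 /= expr1 subnn expr0 mulr1.
  congr (_ * _ * _); apply: eq_bigr => f /andP[_ fe].
  by rewrite /fac in_setU1 (negbTE fe).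
have F0 : FKweight O r side p q (w :\ e) = (1 - p) * A * q ^+ k0.
  rewrite /FKweight (bigD1 e) //= setD11 /= expr0 mul1r subn0 expr1.
  congr (_ * _ * _); apply: eq_bigr => f /andP[_ fe].
  by rewrite /fac in_setD1 fe.
have kk : (k0 <= k1.+1)%N by apply: kTB_le.
have q0 : 0 < q by apply: lt_le_trans q1.
have Q0 : 0 < q ^+ k0 by apply: exprn_gt0.
have Q1 : 0 < q ^+ k1 by apply: exprn_gt0.
have QQ : q ^+ k0 <= q ^+ k1 * q by rewrite -exprSr; apply: ler_weXn2l.
rewrite /theta /Phi.
set Z := (\sum_(w' | _) _).
have [Z0|Zn0] := eqVneq Z 0.
  by rewrite Z0 invr0 !mulr0 mul0r; exact: bnd_ge0.
rewrite F1 F0 div_scale //.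
have p1' : 0 <= 1 - p by rewrite subr_ge0.
clearbody A k0 k1 Z; clear F1 F0.
set a := (1 - p) * A * q ^+ k0.
set b := p * A * q ^+ k1.
have a0 : 0 <= a by rewrite /a; apply: mulr_ge0; [apply: mulr_ge0 => //| exact: ltW].
have b0 : 0 <= b by rewrite /b; apply: mulr_ge0; [apply: mulr_ge0 => //| exact: ltW].
have [ba0|ban0] := eqVneq (b + a) 0.
  by rewrite ba0 invr0 mulr0; exact: bnd_ge0.
have bap : 0 < b + a by rewrite lt_def ban0 addr_ge0.
rewrite /bnd ler_pdivrMr // mulrAC ler_pdivlMr; last exact: D_gt0.
have hh : 0 <= q ^+ k1 - q ^+ k0 / q.
  rewrite subr_ge0 ler_pdivrMr //.
have hc : 0 <= (1 - p) * A * p by apply: mulr_ge0; [apply: mulr_ge0 => //|].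
rewrite -subr_ge0.
have -> : (1 - p) * (b + a) - a * (1 + p / q - p) = ((1 - p) * A * p) * (q ^+ k1 - q ^+ k0 / q).
  by rewrite /a /b; ring.
exact: mulr_ge0.
Qed.
End T.

End G3.
Import G3.

Module G4.
Set Implicit Arguments.
Unset Strict Implicit.
Unset Printing Implicit Defensive.
Import Order.TTheory GRing.Theory Num.Theory.
Local Open Scope ring_scope.
Local Open Scope classical_set_scope.

Section M.
Variable R : realType.
Notation MR := (measurableTypeR R).

Lemma meas_ge (a : R) (bb : bool) : measurable ([set u : R | (a <= u) = bb] : set MR).
Proof.
case: bb.
  have -> : [set u : R | (a <= u) = true] = [set` `[a, +oo[%O] :> set R.
    by apply/seteqP; split => u /=; rewrite in_itv /= andbT.
  exact: measurable_itv.
have -> : [set u : R | (a <= u) = false] = [set` `]-oo, a[%O] :> set R.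
  by apply/seteqP; split => u /=; rewrite in_itv /= ltNge; case: (a <= u).
exact: measurable_itv.
Qed.

Lemma meas_const (P : Prop) : measurable ([set _ : R | P] : set MR).
Proof.
case: (pselect P) => h.
  by have -> : [set _ : R | P] = setT by apply/seteqP; split.
by have -> : [set _ : R | P] = set0 by apply/seteqP; split.
Qed.

Lemma meas_thr (a b : R) (Q : bool -> bool -> Prop) :
  measurable ([set u : R | (0 <= u <= 1) /\ Q (a <= u) (b <= u)] : set MR).
Proof.
pose K i j := [set u : R | (a <= u) = i] `&` [set u : R | (b <= u) = j] `&` [set _ : R | Q i j].
have -> : [set u : R | (0 <= u <= 1) /\ Q (a <= u) (b <= u)] =
   [set` `[0, 1]%O] `&` (K true true `|` K true false `|` K false true `|` K false false).
  apply/seteqP; split => u /=.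
    move=> [h hq]; split; first by rewrite /= in_itv /= h.
    move: hq; rewrite /K /=.
    by case: (a <= u); case: (b <= u) => hq; [left; left; left|left; left; right|left; right|right].
  move=> [h hq]; split; first by move: h; rewrite /= in_itv /=.
  by move: hq; rewrite /K /=; case => [[[|]|]|] [[-> ->]].
apply: measurableI; first exact: measurable_itv.
by rewrite /K; repeat apply: measurableU; repeat apply: measurableI;
  solve [exact: meas_ge| exact: meas_const].
Qed.
End M.

Section M2.
Variable R : realType.
Notation MR := (measurableTypeR R).
Notation lam := (@lebesgue_measure R).

Lemma lam01 : lam [set u : R | 0 <= u <= 1] = 1%E.
Proof.
have -> : [set u : R | 0 <= u <= 1] = [set` `[0, 1]%O] :> set R.
  by apply/seteqP; split => u /=; rewrite in_itv.
by rewrite lebesgue_measure_itv /= lte_fin ltr01 sube0.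
Qed.

Lemma lamI (b : R) : 0 <= b -> lam [set u : R | 0 <= u <= b] = b%:E.
Proof.
move=> b0.
have -> : [set u : R | 0 <= u <= b] = [set` `[0, b]%O] :> set R.
  by apply/seteqP; split => u /=; rewrite in_itv.
rewrite lebesgue_measure_itv /= lte_fin; case: (ltrP 0 b) => h.
  by rewrite oppr0 adde0.
by have -> : b = 0 by apply/eqP; rewrite eq_le h b0.
Qed.

Lemma measI (b : R) : measurable ([set u : R | 0 <= u <= b] : set MR).
Proof.
have -> : [set u : R | 0 <= u <= b] = [set` `[0, b]%O] :> set R.
  by apply/seteqP; split => u /=; rewrite in_itv.
exact: measurable_itv.
Qed.

Lemma lam_sub01 (A : set R) : measurable (A : set MR) -> A `<=` [set u : R | 0 <= u <= 1] ->
  (lam A <= 1)%E.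
Proof.
move=> mA sA; rewrite -lam01; apply: le_measure => //; rewrite inE //.
have -> : [set u : R | 0 <= u <= 1] = [set` `[0, 1]%O] :> set R.
  by apply/seteqP; split => u /=; rewrite in_itv.
exact: measurable_itv.
Qed.

Lemma lam_fin (A : set R) : measurable (A : set MR) -> A `<=` [set u : R | 0 <= u <= 1] ->
  lam A \is a fin_num.
Proof.
move=> mA sA; rewrite ge0_fin_numE //; apply: le_lt_trans (lam_sub01 mA sA) _.
exact: ltey.
Qed.

Variables (T : finType) (f : R -> T).
Hypothesis hm : forall P : pred T, measurable ([set u : R | (0 <= u <= 1) /\ P (f u)] : set MR).

Lemma hm1 c : measurable ([set u : R | (0 <= u <= 1) /\ f u = c] : set MR).
Proof.
have -> : [set u : R | (0 <= u <= 1) /\ f u = c] = [set u : R | (0 <= u <= 1) /\ pred1 c (f u)].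
  by apply/seteqP; split => u /= [h1 h2]; split => //; apply/eqP.
exact: hm.
Qed.

Lemma sum_meas_seq (s : seq T) : uniq s ->
  (\sum_(c <- s) lam [set u : R | (0 <= u <= 1)%R /\ f u = c] =
   lam [set u : R | (0 <= u <= 1)%R /\ f u \in s])%E.
Proof.
elim: s => [|x s IH] /=.
  move=> _; rewrite big_nil.
  have -> : [set u : R | (0 <= u <= 1) /\ f u \in [::]] = set0 by apply/seteqP; split => u //= [].
  by rewrite measure0.
case/andP=> xs us; rewrite big_cons IH //.
have -> : [set u : R | (0 <= u <= 1) /\ f u \in x :: s] =
   [set u : R | (0 <= u <= 1) /\ f u = x] `|` [set u : R | (0 <= u <= 1) /\ f u \in s].
  apply/seteqP; split => u /=.
    by move=> [h]; rewrite in_cons => /orP[/eqP ->|hs]; [left|right].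
  by move=> [[h ->]|[h hs]]; split => //; rewrite in_cons ?eqxx ?hs ?orbT.
rewrite measureU //.
- exact: hm1.
- exact: (hm (fun c => c \in s)).
apply/seteqP; split => u //= [[_ ->] [_ hs]].
by rewrite hs in xs.
Qed.

Lemma sum_meas (P : pred T) :
  \sum_(c | P c) fine (lam [set u : R | (0 <= u <= 1) /\ f u = c]) =
  fine (lam [set u : R | (0 <= u <= 1) /\ P (f u)]).
Proof.
rewrite sum_fine; last first.
  move=> c _; apply: lam_fin; first exact: hm1.
  by move=> u [].
rewrite -big_filter sum_meas_seq; last by rewrite filter_uniq // index_enum_uniq.
congr (fine (lam _)); apply/seteqP; split => u /= [h1 h2]; split => //.
  by move: h2; rewrite mem_filter mem_index_enum andbT.
by rewrite mem_filter mem_index_enum andbT.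
Qed.
End M2.

End G4.
Import G4.

Module G5.
Set Implicit Arguments.
Unset Strict Implicit.
Unset Printing Implicit Defensive.
Import Order.TTheory GRing.Theory Num.Theory.
Local Open Scope ring_scope.

Section C.
Variables (R : realType) (d N : nat) (O : 'M[R]_d) (r : R) (side : pt d N -> bool).
Variables (p q : R).
Notation E := (boxE N O r).
Notation K := (kernel O r side p q).
Notation kp := (kpow O r side p q).
Notation lam := (@lebesgue_measure R).
Notation st := (step O r side p q).

Lemma noTB_mono (w w' : config d N) : w' \subset w -> noTB O r side w -> noTB O r side w'.
Proof.
move=> sub /fintype.forallP H; apply/fintype.forallP => x; apply/implyP => xT.
apply/fintype.forallP => y; apply/implyP => yB.
move: (H x); rewrite xT /= => /fintype.forallP /(_ y); rewrite yB /=.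
apply: contra; apply: connect_sub => a b h; apply: connect1.
exact: (fintype.subsetP sub _ h).
Qed.

Definition Inv (c : state d N) := (c.2 \subset E) && noTB O r side c.2.

Lemma step_I c e u : Inv c -> e \in E -> Inv (st c e u).
Proof.
move=> /andP[sE nt] eE; rewrite /step /Inv /=.
case: ifP => [/andP[_ h]|_].
  by rewrite h andbT finset.subUset finset.sub1set eE sE.
by rewrite (fintype.subset_trans (subD1set _ _) sE) (noTB_mono (subD1set _ _) nt).
Qed.

Lemma step_meas c e (P : pred (state d N)) :
  measurable ([set u : R | (0 <= u <= 1) /\ P (st c e u)]%classic : set (measurableTypeR R)).
Proof.
exact: (meas_thr (theta O r side p q c.1 e) (theta O r side p q c.2 e)
  (fun b1 b2 => P ((if b1 then e |: c.1 else c.1 :\ e),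
      (if b2 && noTB O r side (e |: c.2) then e |: c.2 else c.2 :\ e)))).
Qed.

Lemma K_sum c (P : pred (state d N)) :
  \sum_(b | P b) K c b = (#|E|%:R)^-1 *
    \sum_(e in E) fine (lam [set u : R | (0 <= u <= 1) /\ P (st c e u)]%classic).
Proof.
rewrite /kernel -big_distrr /=; congr (_ * _).
rewrite exchange_big /=; apply: eq_bigr => e eE.
exact: (sum_meas (step_meas c e)).
Qed.

Lemma K_ge0 c b : 0 <= K c b.
Proof.
apply: mulr_ge0; first by rewrite invr_ge0.
by apply: sumr_ge0 => e _; apply: fine_ge0; apply: measure_ge0.
Qed.

Lemma K_row c : \sum_b K c b <= 1.
Proof.
have := K_sum c predT.
rewrite (_ : \sum_(b | predT b) K c b = \sum_b K c b) // => ->.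
rewrite (eq_bigr (fun _ => 1)); last first.
  move=> e _.
  have -> : [set u : R | (0 <= u <= 1) /\ predT (st c e u)]%classic =
               [set u : R | 0 <= u <= 1]%classic.
    by apply/seteqP; split => u /= => [[]|].
  by rewrite lam01.
rewrite sumr_const.
have [->|En0] := eqVneq #|E| 0%N; first by rewrite mulr0n mulr0.
by rewrite mulVf // pnatr_eq0.
Qed.

Lemma kp_ge0 n a b : 0 <= kp n a b.
Proof.
elim: n a b => [|n IH] a b /=; first by rewrite ler0n.
by apply: sumr_ge0 => c _; apply: mulr_ge0 => //; apply: K_ge0.
Qed.

Lemma kp_row n a : \sum_b kp n a b <= 1.
Proof.
elim: n a => [|n IH] a /=.
  by rewrite (bigD1 a) //= eqxx big1 ?addr0 // => b /negbTE; rewrite eq_sym => ->.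
rewrite exchange_big /=.
apply: le_trans (IH a); apply: ler_sum => c _.
rewrite -big_distrr /= -[X in _ <= X]mulr1; apply: ler_wpM2l; first exact: kp_ge0.
exact: K_row.
Qed.

Lemma kp_CK n a b : kp n.+1 a b = \sum_c K a c * kp n c b.
Proof.
elim: n a b => [|n IH] a b.
  rewrite /= (bigD1 a) //= eqxx mul1r big1 ?addr0; last first.
    by move=> c /negbTE; rewrite eq_sym => ->; rewrite mul0r.
  rewrite (bigD1 b) //= eqxx mulr1 big1 ?addr0 //.
  by move=> c /negbTE ->; rewrite mulr0.
rewrite (_ : kp n.+2 a b = \sum_c kp n.+1 a c * K c b) //.
rewrite (eq_bigr (fun c => \sum_c' K a c' * kp n c' c * K c b)); last first.
  by move=> c _; rewrite IH big_distrl.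
rewrite exchange_big /=; apply: eq_bigr => c' _.
rewrite big_distrr /=; apply: eq_bigr => c _; by rewrite mulrA.

Qed.

Lemma law_mu (mu : state d N -> R) t b : is_stationary O r side p q mu ->
  law_at O r side p q mu t b = mu b.
Proof.
case=> _ _ _ st_mu.
elim: t b => [|t IH] b.
  rewrite /law_at (bigD1 b) //= eqxx mulr1 big1 ?addr0 //.
  by move=> a /negbTE ->; rewrite mulr0.
rewrite /law_at /= -st_mu.
rewrite (eq_bigr (fun a => \sum_c mu a * kp t a c * K c b)); last first.
  by move=> a _; rewrite big_distrr /=; apply: eq_bigr => c _; rewrite mulrA.
rewrite exchange_big /=; apply: eq_bigr => c _.
by rewrite -big_distrl /= -/(law_at O r side p q mu t c) IH.
Qed.

Lemma K_reach c b : K c b != 0 ->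
  exists e, exists u : R, [/\ e \in E, 0 <= u <= 1 & st c e u = b].
Proof.
move=> Kn0; case: (pselect (exists e, exists u : R, [/\ e \in E, 0 <= u <= 1 & st c e u = b])) => // H.
exfalso; move/eqP: Kn0; apply.
rewrite /kernel big1 ?mulr0 // => e eE.
rewrite (_ : [set u : R | (0 <= u <= 1) /\ st c e u = b]%classic = set0) ?measure0 //.
apply/seteqP; split => u //= [h1 h2]; apply: H; exists e, u; split => //.
Qed.

End C.

End G5.
Import G5.

Module G6.
Set Implicit Arguments.
Unset Strict Implicit.
Unset Printing Implicit Defensive.
Import Order.TTheory GRing.Theory Num.Theory.
Local Open Scope ring_scope.

Section D.
Variables (R : realType) (d N : nat) (O : 'M[R]_d) (r : R) (side : pt d N -> bool).
Variables (p q : R) (G : seq {set pt d N}).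
Notation E := (boxE N O r).
Notation K := (kernel O r side p q).
Notation kp := (kpow O r side p q).
Notation lam := (@lebesgue_measure R).
Notation st := (step O r side p q).

Definition nG (w : config d N) := #|[set f in G | f \in w]|.

Lemma closed_nG w : closed_in G w = (nG w == 0)%N.
Proof.
rewrite /nG cards_eq0; apply/allP/eqP => [H|H].
  apply/finset.setP => f; rewrite !inE; case fG: (f \in G) => //=.
  by apply/negbTE; apply: H.
move=> f fG; have : f \in [set f in G | f \in w] = false by rewrite H finset.in_set0.
by rewrite inE fG /= => ->.
Qed.

Lemma nG_U e (w : config d N) : (nG w <= nG (e |: w))%N.
Proof.
apply: subset_leq_card; apply/fintype.subsetP => f; rewrite !inE.
by case/andP=> -> ->; rewrite orbT.
Qed.

Lemma nG_D e (w : config d N) : (nG w <= (nG (w :\ e)).+1)%N.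
Proof.
rewrite /nG; apply: leq_trans (subset_leq_card (_ : _ \subset e |: [set f in G | f \in w :\ e])) _.
  apply/fintype.subsetP => f; rewrite !inE; case/andP=> -> ->.
  by case: (f == e).
rewrite cardsU1; case: (e \in _) => //.
Qed.

Lemma nG_D_eq e (w : config d N) : ~~ ((e \in G) && (e \in w)) -> nG (w :\ e) = nG w.
Proof.
move=> h; rewrite /nG; apply: eq_card => f; rewrite !inE.
case: (eqVneq f e) => [->|] //=.
by move: h; case: (e \in G); case: (e \in w).
Qed.

Lemma step_nG c e u : Inv O r side c ->
  [/\ (nG c.2 <= (nG (st c e u).2).+1)%N &
      (nG (st c e u).2 < nG c.2)%N -> [&& e \in G, e \in c.2 & u < theta O r side p q c.2 e]].
Proof.
move=> /andP[_ nt]; rewrite /step /=.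
case: ifP => [_|hf].
  split; first exact: leq_trans (nG_U e _) (leqnSn _).
  by rewrite ltnNge nG_U.
split; first exact: nG_D.
case: (boolP ((e \in G) && (e \in c.2))) => [/andP[eG ew]|h]; last first.
  by rewrite nG_D_eq // ltnn.
move=> _; rewrite eG ew /= ltNge; apply/negP => hl.
move: hf; rewrite hl /=.
have -> : e |: c.2 = c.2 by apply/finset.setUidPr; rewrite finset.sub1set.
by rewrite nt.
Qed.
End D.

End G6.
Import G6.

Module G7.
Set Implicit Arguments.
Unset Strict Implicit.
Unset Printing Implicit Defensive.
Import Order.TTheory GRing.Theory Num.Theory.
Local Open Scope ring_scope.

Section D.
Variables (R : realType) (d N : nat) (O : 'M[R]_d) (r : R) (side : pt d N -> bool).
Variables (p q : R) (G : seq {set pt d N}).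
Notation E := (boxE N O r).
Notation K := (kernel O r side p q).
Notation kp := (kpow O r side p q).
Notation lam := (@lebesgue_measure R).
Notation st := (step O r side p q).
Notation n := (nG G).

Lemma K_dec (p0 : 0 <= p) (p1 : p <= 1) (q1 : 1 <= q) c : Inv O r side c ->
  \sum_(b | (n b.2 < n c.2)%N) K c b <= (n c.2)%:R * ((#|E|%:R)^-1 * bnd p q).
Proof.
move=> Ic; rewrite K_sum mulrCA; apply: ler_wpM2l; first by rewrite invr_ge0.
pose M := [set f in G | f \in c.2].
apply: (@le_trans _ _ (\sum_(e in E) (e \in M)%:R * bnd p q)).
  apply: ler_sum => e eE.
  case hM: (e \in M).
    rewrite mul1r.
    have hb := bnd_ge0 p0 p1 q1.
    rewrite -[X in _ <= X]/(fine (bnd p q)%:E) -(lamI hb).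
    apply: fine_le.
    - apply: (lam_fin (step_meas O r side p q c e (fun b : state d N => (n b.2 < n c.2)%N))).
      by move=> u [].
    - by rewrite lamI.
    apply: le_measure; rewrite ?inE.
      exact: (step_meas O r side p q c e (fun b : state d N => (n b.2 < n c.2)%N)).
      exact: measI.
    move=> u /= [/andP[u0 u1] hn]; have [_ /(_ hn) /and3P[_ _ hu]] := step_nG p q G e u Ic.
    rewrite u0 /=; apply: (le_trans (ltW hu)).
    apply: theta_le => //; first by case/andP: Ic.
  rewrite mul0r.
  rewrite (_ : [set u : R | (0 <= u <= 1) /\ (n (st c e u).2 < n c.2)%N]%classic = set0).
    by rewrite measure0.
  apply/seteqP; split => u //= [_ hn]; have [_ /(_ hn) /and3P[eG ew _]] := step_nG p q G e u Ic.
  by move: hM; rewrite inE eG ew.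
rewrite -big_distrl /=; apply: ler_wpM2r; first exact: bnd_ge0.
rewrite (eq_bigr (fun e => if e \in M then 1 else 0)); last by move=> e _; case: (e \in M).
rewrite -big_mkcondr /= sumr_const ler_nat.
apply: subset_leq_card; apply/fintype.subsetP => e; rewrite unfold_in /= => /andP[_ h]; exact: h.
Qed.
End D.

End G7.
Import G7.

Module G8.
Set Implicit Arguments.
Unset Strict Implicit.
Unset Printing Implicit Defensive.
Import Order.TTheory GRing.Theory Num.Theory.
Local Open Scope ring_scope.

Lemma pow_aux (R : realType) (g x : R) (a b : nat) : 0 <= x -> g <= 1 -> g <= x ^+ a ->
  (b <= a)%N -> g <= x ^+ b.
Proof.
move=> x0 g1 ga ba; case: (lerP x 1) => hx.
  exact: le_trans ga (ler_wiXn2l x0 hx ba).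
exact: le_trans g1 (exprn_ege1 _ (ltW hx)).
Qed.

Lemma binom_aux (R : realType) (a b : R) (m : nat) : 0 <= a -> 0 <= b ->
  a ^+ m.+1 + a ^+ m * (m.+1%:R * b) <= (a + b) ^+ m.+1.
Proof.
move=> a0 b0; elim: m => [|m IH].
  by rewrite expr1 expr0 mul1r mul1r.
rewrite [X in _ <= X]exprS.
apply: le_trans (ler_wpM2l (addr_ge0 a0 b0) IH).
have h1 : 0 <= a ^+ m by apply: exprn_ge0.
have e2 : m.+2%:R = m%:R + 2 :> R by rewrite -addn2 natrD.
have e1 : m.+1%:R = m%:R + 1 :> R by rewrite -addn1 natrD.
rewrite e2 e1 !exprS -subr_ge0.
have -> : (a + b) * (a * a ^+ m + a ^+ m * ((m%:R + 1) * b)) -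
  (a * (a * a ^+ m) + a * a ^+ m * ((m%:R + 2) * b)) = (m%:R + 1) * (a ^+ m * b * b).
  by ring.
apply: mulr_ge0; first by apply: addr_ge0.
by apply: mulr_ge0 => //; apply: mulr_ge0.
Qed.

Section F.
Variables (R : realType) (d N : nat) (O : 'M[R]_d) (r : R) (side : pt d N -> bool).
Variables (p q : R) (G : seq {set pt d N}).
Notation E := (boxE N O r).
Notation K := (kernel O r side p q).
Notation kp := (kpow O r side p q).
Notation st := (step O r side p q).
Notation n := (nG G).

Definition gs s c := \sum_(b | closed_in G b.2) kp s c b.

Lemma gs_ge0 s c : 0 <= gs s c.
Proof. by apply: sumr_ge0 => b _; apply: kp_ge0. Qed.

Lemma gs_le1 s c : gs s c <= 1.
Proof.
apply: le_trans (kp_row O r side p q s c).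
rewrite [X in _ <= X](bigID (fun b => closed_in G b.2)) /= lerDl.
by apply: sumr_ge0 => b _; apply: kp_ge0.
Qed.

Lemma main_bound (p0 : 0 <= p) (p1 : p <= 1) (q1 : 1 <= q) s c :
  Inv O r side c -> gs s c <= (s%:R * ((#|E|%:R)^-1 * bnd p q)) ^+ n c.2.
Proof.
set al := (#|E|%:R)^-1 * bnd p q.
have al0 : 0 <= al by apply: mulr_ge0; [rewrite invr_ge0| exact: bnd_ge0].
elim: s c => [|s IH] c Ic.
  case hn: (n c.2) => [|m]; first by rewrite expr0 gs_le1.
  rewrite mul0r expr0n /= le_eqVlt; apply/orP; left; apply/eqP.
  apply: big1 => b; rewrite closed_nG /= => /eqP hb.
  by rewrite /=; case: eqP => // ec; rewrite ec hb in hn.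
case hn: (n c.2) => [|m]; first by rewrite expr0 gs_le1.
set x := s%:R * al.
have x0 : 0 <= x by apply: mulr_ge0.
have -> : gs s.+1 c = \sum_c' K c c' * gs s c'.
  rewrite /gs (eq_bigr (fun b => \sum_c' K c c' * kp s c' b)); last first.
    by move=> b _; apply: kp_CK.
  rewrite exchange_big /=; apply: eq_bigr => c' _; by rewrite big_distrr.
apply: (@le_trans _ _ (\sum_c' (x ^+ m.+1 * K c c' +
     x ^+ m * (if (n c'.2 < m.+1)%N then K c c' else 0)))).
  apply: ler_sum => c' _.
  have [K0|Kn0] := eqVneq (K c c') 0.
    by rewrite K0 mul0r mulr0 if_same mulr0 addr0.
  have [e [u [eE _ ec']]] := K_reach Kn0.
  have Ic' : Inv O r side c' by rewrite -ec'; apply: step_I.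
  have [hle _] := step_nG p q G e u Ic.
  rewrite ec' hn in hle.
  have hg := IH c' Ic'.
  have xm0 : 0 <= x ^+ m by apply: exprn_ge0.
  have xm1 : 0 <= x ^+ m.+1 by apply: exprn_ge0.
  case: ltnP => hlt.
    have em : n c'.2 = m by apply/eqP; rewrite eqn_leq -ltnS hlt -ltnS.
    rewrite -mulrDl [X in _ <= X]mulrC; apply: ler_wpM2l; first exact: K_ge0.
    rewrite em in hg; apply: le_trans hg _; rewrite lerDr //.

  rewrite mulr0 addr0 [X in _ <= X]mulrC; apply: ler_wpM2l; first exact: K_ge0.
  exact: pow_aux x0 (gs_le1 _ _) hg hlt.
rewrite big_split /= -(big_distrr (x ^+ m.+1)) -(big_distrr (x ^+ m)) -big_mkcond /=.
have -> : s.+1%:R * al = x + al by rewrite /x mulrSr mulrDl mul1r.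
apply: le_trans _ (binom_aux m x0 al0).
apply: lerD.
  rewrite -[X in _ <= X]mulr1; apply: ler_wpM2l; first exact: exprn_ge0.
  exact: K_row.
apply: ler_wpM2l; first exact: exprn_ge0.
have := K_dec G p0 p1 q1 Ic; rewrite hn.
by rewrite /al.
Qed.
End F.

End G8.
Import G8.

Theorem lemma4p1 (R : realType) (d N : nat) (O : 'M[R]_d) (r : R) (i0 : 'I_d)
  (side : pt d N -> bool) (p q : R) (mu : state d N -> R)
  (G : seq {set pt d N}) (t s k : nat) (y : config d N) :
  (2 <= d)%N ->
  O *m O^T = 1%:M -> 0 < r ->
  (forall z : 'I_d -> int, in_cube O r z -> forall j, `|z j| <= N%:Z) ->
  (forall v, v \in boxV N O r -> 0 < face_coord O i0 (zcoord v) -> side v) ->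
  (forall v, v \in boxV N O r -> face_coord O i0 (zcoord v) < 0 -> ~~ side v) ->
  0 <= p <= 1 -> 1 <= q ->
  is_unique_stationary O r side p q mu ->
  star_path R G -> {subset G <= boxE N O r} -> simple_path G ->
  y \subset boxE N O r ->
  #|[set e in G | e \notin y]| = k ->
  0 < PY O r side p q mu t y ->
  cond_closed O r side p q mu t s y G <=
  ((s%:R * (1 - p)) / (#|boxE N O r|%:R * (1 + p / q - p))) ^+ (#|path_support G| - k).
Proof.
move=> _ _ _ _ _ _ /andP[p0 p1] q1 [stat _] _ _ _ _ hk PYpos.
have law := fun b => @law_mu _ _ _ O r side p q mu t b stat.
have -> : (s%:R * (1 - p)) / (#|boxE N O r|%:R * (1 + p / q - p)) =
    s%:R * ((#|boxE N O r|%:R)^-1 * bnd p q).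
  by rewrite /bnd invfM; ring.
have -> : (#|path_support G| - k)%N = nG G y.
  rewrite -hk /path_support /nG -(cardsID y [set e in G]).
  have -> : [set e in G] :&: y = [set f in G | f \in y].
    by apply/finset.setP => f; rewrite !inE.
  have -> : [set e in G] :\: y = [set f in G | f \notin y].
    by apply/finset.setP => f; rewrite !inE andbC.
  by rewrite addnK.
rewrite /cond_closed ler_pdivrMr // /PY_closed /PY big_distrr /=.
apply: ler_sum => x _; rewrite law mulrC.
case: stat => mu0 _ mucs _.
have [->|hne] := eqVneq (mu (x, y)) 0; first by rewrite !mulr0.
have cs : chain_space O r side (x, y).
  by apply/negP => /negP h; move: hne; rewrite mucs // eqxx.
have Ic : Inv O r side (x, y).
  by move: cs; rewrite /chain_space /Inv /= => /and4P[_ -> -> _].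
apply: ler_wpM2r; first exact: mu0.
exact: (main_bound G p0 p1 q1 s Ic).
Qed.
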